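(* Let $1\le m\le n-1$, let $A\otimes B\in Y$, and let $g\in\mathrm{GL}_{m(n-m)}(\mathbb{R})$ be such that $(A\otimes B)g\in Y$. Then $g$ is an elementary tensor: $g=g_m\otimes g_{n-m}$ for some $g_m\in\mathrm{GL}_m(\mathbb{R})$ and $g_{n-m}\in\mathrm{GL}_{n-m}(\mathbb{R})$.
   Context: $Y=\{A\otimes B: A\in\mathrm{Mat}_{n\times m}(\mathbb{R}),B\in\mathrm{Mat}_{n\times(n-m)}(\mathbb{R})$ of full rank, column space of $A$ orthogonal to column space of $B\}$, where $A\otimes B=(a_{ij}B)_{i,j}$ denotes the Kronecker product (an $n^2\times m(n-m)$ matrix); similarly $g_m\otimes g_{n-m}$ is the Kronecker product. *)

(* Defs.v *)
From mathcomp Require Import all_boot all_algebra.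
From mathcomp Require Import reals.
From mathcomp.real_closed Require Export mxtens.
Set Implicit Arguments. Unset Strict Implicit. Unset Printing Implicit Defensive.
Import GRing.Theory Num.Theory.
Local Open Scope ring_scope.

(* Kronecker product: (A *t B) = (a_ij B)_{ij}, from real_closed/mxtens
   (row index (i,k) ↦ i * p + k, column index (j,l) ↦ j * q + l). *)

Definition inY (R : realType) (n m : nat) (M : 'M[R]_(n * n, m * (n - m))) : Prop :=
  exists (A : 'M[R]_(n, m)) (B : 'M[R]_(n, n - m)),
    [/\ \rank A = m, \rank B = (n - m)%N, A^T *m B = 0 & M = A *t B].

(* Main.v *)
Require Import Defs.
From mathcomp Require Import all_boot all_algebra.
From mathcomp Require Import reals.
From mathcomp Require Import zify.
Import GRing.Theory Num.Theory.
Local Open Scope ring_scope.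

Section Aux.
Context {R : fieldType}.

Lemma tens11 p q : (1%:M : 'M[R]_p) *t (1%:M : 'M[R]_q) = 1%:M.
Proof.
apply/matrixP=> i j.
case: (mxtens_indexP i)=> [a b]; case: (mxtens_indexP j)=> [c d].
rewrite tensmxE !mxE (can_eq (@mxtens_indexK _ _)) xpair_eqE.
by case: (a == c); case: (b == d); rewrite ?mulr1 ?mulr0 ?mul0r.
Qed.

Lemma nz_entry p q (Y : 'M[R]_(p, q)) : Y != 0 -> exists k l, Y k l != 0.
Proof.
move=> nY; case: (boolP [exists k, exists l, Y k l != 0]).
  by move=> /existsP[k /existsP[l Hkl]]; exists k, l.
move=> /existsPn H; case/negP: nY; apply/eqP/matrixP=> k l.
move: (H k) => /existsPn /(_ l); rewrite negbK mxE => /eqP //.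
Qed.

Lemma tens_eq0l m n p q (X : 'M[R]_(m, n)) (Y : 'M[R]_(p, q)) :
  X *t Y = 0 -> Y != 0 -> X = 0.
Proof.
move=> H /nz_entry [k [l Hkl]]; apply/matrixP=> i j.
have := congr1 (fun M : 'M[R]_(m * p, n * q) => M (mxtens_index (i, k)) (mxtens_index (j, l))) H.
rewrite /= tensmxE !mxE => /eqP; rewrite mulf_eq0 (negbTE Hkl) orbF => /eqP //.
Qed.

Lemma tens_eq0r m n p q (X : 'M[R]_(m, n)) (Y : 'M[R]_(p, q)) :
  X *t Y = 0 -> X != 0 -> Y = 0.
Proof.
move=> H /nz_entry [k [l Hkl]]; apply/matrixP=> i j.
have := congr1 (fun M : 'M[R]_(m * p, n * q) => M (mxtens_index (k, i)) (mxtens_index (l, j))) H.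
rewrite /= tensmxE !mxE => /eqP; rewrite mulf_eq0 (negbTE Hkl) /= => /eqP //.
Qed.

Lemma rank_nz p q (Y : 'M[R]_(p, q)) : (0 < \rank Y)%N -> Y != 0.
Proof. by apply: contraTneq => ->; rewrite mxrank0. Qed.

Lemma sub_col n p q k (C : 'M[R]_(n, p)) (B : 'M[R]_(n, q)) (A' : 'M[R]_(n, k)) :
  \rank C = p -> \rank B = (n - p)%N -> (p <= n)%N -> C^T *m B = 0 ->
  B^T *m A' = 0 -> exists X, A' = C *m X.
Proof.
move=> rC rB pn CB BA.
have s1 : (C^T <= kermx B)%MS by apply/sub_kermxP.
have s2 : (A'^T <= kermx B)%MS.
  by apply/sub_kermxP; rewrite -(trmxK B) -trmx_mul BA trmx0.
have s3 : (kermx B <= C^T)%MS.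
  rewrite -(mxrank_leqif_sup s1).2 mxrank_ker mxrank_tr rC rB.
  by rewrite subKn.
have /submxP [D HD] := submx_trans s2 s3.
by exists D^T; rewrite -(trmxK A') HD trmx_mul trmxK.
Qed.

Lemma left_inv n p (A : 'M[R]_(n, p)) : \rank A = p -> pinvmx A *m A = 1%:M.
Proof.
move=> rA; have s : ((1%:M : 'M_p) <= A)%MS by apply: submx_full; apply/eqP.
by have := mulmxKpV s; rewrite mul1mx.
Qed.

End Aux.

Theorem mainTheorem10 (R : realType) (n m : nat) (hm1 : (1 <= m)%N) (hm2 : (m <= n - 1)%N)
  (A : 'M[R]_(n, m)) (B : 'M[R]_(n, n - m))
  (hA : \rank A = m) (hB : \rank B = (n - m)%N) (hAB : A^T *m B = 0)
  (g : 'M[R]_(m * (n - m))) (hg : g \in unitmx)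
  (hY : inY (A *t B *m g)) :
  exists (gm : 'M[R]_m) (gnm : 'M[R]_(n - m)),
    [/\ gm \in unitmx, gnm \in unitmx & g = gm *t gnm].
Proof.
case: hY => A' [B'] [rA' rB' _ E].
have mn : (m <= n)%N by move: hm2; lia.
have nm1 : (0 < n - m)%N by move: hm1 hm2; lia.
have BA : B^T *m A = 0 by rewrite -(trmxK A) -trmx_mul hAB trmx0.
have BA' : B^T *m A' = 0.
  have nB' : B' != 0 by apply: rank_nz; rewrite rB'.
  apply: (tens_eq0l _ _ _ _ _ _ _ nB').
  have := congr1 (mulmx (B^T *t 1%:M)) E.
  by rewrite tensmx_mul mul1mx mulmxA tensmx_mul BA tens0mx mul0mx.
have AB' : A^T *m B' = 0.
  have nA' : A' != 0 by apply: rank_nz; rewrite rA'.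
  apply: (tens_eq0r _ _ _ _ _ _ _ nA').
  have := congr1 (mulmx (1%:M *t A^T)) E.
  by rewrite tensmx_mul mul1mx mulmxA tensmx_mul hAB tensmx0 mul0mx.
have [X HX] := sub_col _ _ _ _ _ _ _ hA hB mn hAB BA'.
have [Y HY] : exists Y, B' = B *m Y.
  apply: (sub_col _ _ _ _ _ _ _ hB _ _ BA AB'); first by rewrite subKn.
  exact: leq_subr.
have Hg : g = X *t Y.
  have := congr1 (mulmx (pinvmx A *t pinvmx B)) E.
  rewrite mulmxA tensmx_mul !left_inv // tens11 mul1mx => ->.
  by rewrite HX HY tensmx_mul !mulmxA !left_inv // !mul1mx.
exists X, Y; split => //; rewrite -row_full_unit /row_full eqn_leq rank_leq_col /=.
  by rewrite -{1}rA' HX mxrankM_maxr.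
by rewrite -{1}rB' HY mxrankM_maxr.
Qed.
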